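(* Let $N$ be a network (an unrooted, binary, level-1, semi-directed phylogenetic network, as defined in the context) with at least four leaves. Then $N$ contains an out leaf or a tree cherry.
   Context: A network is a finite connected graph with no self-loops or multiple edges, whose degree-1 vertices are the leaves (labelled by a leaf set $X$) and whose other vertices all have degree 3 (binary). Some edges are directed: a reticulation vertex is a vertex with exactly two incoming directed edges (its reticulation edges) and one further incident edge (its out edge), which is left undirected; the only directed edges are reticulation edges (semi-directed). The network is phylogenetic: there is a valid root location, i.e. an edge that can be subdivided by a new root vertex $\rho$ so that orienting every undirected edge away from $\rho$ gives an orientation consistent with the given directions of all reticulation edges (so every non-root vertex has in-degree 1 and out-degree 2, except reticulation vertices, which have in-degree 2 and out-degree 1). The network is level-1: every biconnected component contains at most one reticulation vertex. An out leaf is a leaf incident to the out edge of a reticulation vertex. A tree cherry is a subgraph consisting of a vertex $v$ and two leaves adjacent to $v$, which is separated from the rest of the network by deleting a cut edge incident to $v$ (a cut edge is an edge whose removal disconnects the graph). *)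

(* Defs.v *)
(* A network is given by a finite vertex type V, the
   (symmetric, irreflexive) adjacency relation [adj] of the underlying
   undirected graph, and a relation [dir] with [dir u v] meaning that the
   edge {u,v} is directed from u to v. All other edges are undirected. *)
From mathcomp Require Import all_boot.
Set Implicit Arguments. Unset Strict Implicit. Unset Printing Implicit Defensive.

Section Network.
Variables (V : finType) (adj dir : rel V).

Definition deg (v : V) : nat := #|[set w | adj v w]|.
Definition indeg (v : V) : nat := #|[set u | dir u v]|.

Definition leaf (v : V) : bool := deg v == 1.

(* reticulation vertex: exactly two incoming directed edges and one further
   incident edge (the out edge, required undirected in [semi_directed]) *)
Definition reticulation (v : V) : bool := (indeg v == 2) && (deg v == 3).

Definition simple_graph : Prop := symmetric adj /\ irreflexive adj.
Definition connected : Prop := forall x y : V, connect adj x y.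
Definition binary : Prop := forall v : V, (deg v == 1) || (deg v == 3).

Definition semi_directed : Prop :=
  [/\ forall u v, dir u v -> adj u v,
      forall u v, dir u v -> ~~ dir v u,
      forall u v, dir u v -> reticulation v
    & forall r w, reticulation r -> adj r w -> ~~ dir w r -> ~~ dir r w].

(* The graph obtained by subdividing the edge {a,b} with a new root
   vertex rho = None. *)
Definition subdiv_edge (a b : V) : rel (option V) :=
  fun x y =>
    match x, y with
    | Some u, Some v => adj u v && ~~ (((u == a) && (v == b)) || ((u == b) && (v == a)))
    | None, Some v => (v == a) || (v == b)
    | Some u, None => (u == a) || (u == b)
    | None, None => false
    end.

(* [o] orients the subdivided graph away from rho, consistently with the
   given directions of the reticulation edges: it is an orientation of every
   edge, agrees with [dir], is acyclic, rho has in-degree 0, reticulations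
   in-degree 2 and all other vertices in-degree 1. *)
Definition rooted_orientation (a b : V) (o : rel (option V)) : Prop :=
  [/\ forall x y, o x y -> subdiv_edge a b x y,
      forall x y, subdiv_edge a b x y -> o x y (+) o y x,
      forall u v, dir u v -> subdiv_edge a b (Some u) (Some v) -> o (Some u) (Some v)
    & forall x y, o x y -> ~~ connect o y x] /\
  #|[set y | o y None]| = 0 /\
  (forall v, #|[set y | o y (Some v)]| = (if reticulation v then 2 else 1)).

Definition has_valid_root : Prop :=
  exists a b, adj a b /\ exists o : rel (option V), rooted_orientation a b o.

Definition induced_connected (S : {set V}) : Prop :=
  forall x y, x \in S -> y \in S ->
    connect [rel u v | [&& adj u v, u \in S & v \in S]] x y.
Definition nonseparable (S : {set V}) : Prop :=
  induced_connected S /\ forall z, z \in S -> induced_connected (S :\ z).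
Definition biconnected_component (S : {set V}) : Prop :=
  nonseparable S /\ forall S' : {set V}, S \subset S' -> nonseparable S' -> S' = S.

Definition level1 : Prop :=
  forall S, biconnected_component S -> #|[set r in S | reticulation r]| <= 1.

Definition network : Prop :=
  [/\ simple_graph, connected, binary, semi_directed & has_valid_root] /\ level1.

Definition has_out_leaf : Prop :=
  exists r l, [/\ reticulation r, leaf l, adj r l & ~~ dir l r].

Definition cut_edge (u v : V) : Prop :=
  adj u v /\
  ~~ connect [rel x y | adj x y && ~~ (((x == u) && (y == v)) || ((x == v) && (y == u)))] u v.

Definition has_tree_cherry : Prop :=
  exists v l1 l2 w,
    [/\ leaf l1, leaf l2, l1 != l2, adj v l1 & adj v l2] /\
    cut_edge v w /\
      ([set x | connect [rel x y | adj x y &&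
            ~~ (((x == v) && (y == w)) || ((x == w) && (y == v)))] v x]
        = [set v; l1; l2]).

End Network.

(* Main.v *)
Require Import Defs.
From mathcomp Require Import all_boot.

Theorem lemma1 (V : finType) (adj dir : rel V) :
  network adj dir -> 4 <= #|[set x | leaf adj x]| ->
  has_out_leaf adj dir \/ has_tree_cherry adj.
Proof.
move=> [[[sym irr] conn bin [sd1 sd2 sd3 sd4] [a [b [ab [o [[o1 o2 o3 o4] [oroot oin]]]]]]] _] Hleaves.
have leafN : forall l v y, leaf adj l -> adj l v -> adj l y -> y = v.
  move=> l v y /cards1P[z Hz] lv ly.
  have : v \in [set w | adj l w] by rewrite inE.
  have : y \in [set w | adj l w] by rewrite inE.
  by rewrite Hz !inE => /eqP-> /eqP->.
have [u0 Hu0] : exists u, ~~ leaf adj u.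
  have : 0 < #|[set x | leaf adj x]| by apply: leq_trans Hleaves.
  case/card_gt0P => x; rewrite inE => lx.
  have : 0 < #|[set w | adj x w]| by move: lx; rewrite /leaf /deg => /eqP->.
  case/card_gt0P => y; rewrite inE => xy.
  case Hy: (leaf adj y); last by exists y; rewrite Hy.
  exfalso.
  have cl1 : forall u w, adj u w -> u \in [set x; y] -> w \in [set x; y].
    move=> u w uw; rewrite !inE => /orP[] /eqP Eu; subst u.
      by rewrite (leafN x y w lx xy uw) eqxx orbT.
    by rewrite (leafN y x w Hy _ uw) ?eqxx // sym.
  have cl : closed adj [set x; y].
    move=> u w uw; apply/idP/idP; first exact: cl1.
    by apply: cl1; rewrite sym.
  have sub : [set x | leaf adj x] \subset [set x; y].
    apply/subsetP => z _.
    by rewrite -(closed_connect cl (conn x z)) !inE eqxx.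
  have := subset_leq_card sub.
  rewrite cards2 => H1; have := leq_trans Hleaves H1; by case: (x != y).
pose M u := #|[set y | connect o (Some u) y]|.
case: (@arg_minnP V u0 (fun u => ~~ leaf adj u) M Hu0) => v Hv Hmin.
have chl : forall y, o (Some v) y -> exists2 l, y = Some l & leaf adj l.
  case=> [l|] H.
    exists l => //; apply/negPn/negP => nl.
    have := Hmin l nl; rewrite leqNgt => /negP; apply.
    apply: proper_card; apply/properP; split.
      apply/subsetP => z; rewrite !inE => Hz.
      exact: connect_trans (connect1 H) Hz.
    by exists (Some v); rewrite inE ?connect0 //; apply: o4 H.
  have : Some v \in [set y | o y None] by rewrite inE.
  by rewrite (cards0_eq oroot) inE.
have deg3 : #|[set w | adj v w]| = 3.
  by move: (bin v) Hv; rewrite /leaf /deg => /orP[->|/eqP->].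
pose f w := if ((v == a) && (w == b)) || ((v == b) && (w == a)) then None else Some w.
have fN : forall w, adj v w -> subdiv_edge adj a b (Some v) (f w).
  move=> w vw; rewrite /f; case: ifP => H /=; last by rewrite vw H.
  by case/orP: H => /andP[/eqP-> _]; rewrite eqxx ?orbT.
have finj : {in [set w | adj v w] &, injective f}.
  move=> w1 w2 _ _; rewrite /f; case: ifP; case: ifP => // H1 H2; last by case.
  move: H1 H2 => /orP[] /andP[/eqP E1 /eqP E2] /orP[] /andP[/eqP E3 /eqP E4];
    subst; rewrite ?irr in ab => //.
have cardF : #|f @: [set w | adj v w]| = 3 by rewrite card_in_imset.
have children : forall y, y \in f @: [set w | adj v w] :\: [set y | o y (Some v)] ->
    exists l, [/\ y = Some l, o (Some v) (Some l) & leaf adj l].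
  move=> y; rewrite inE => /andP[nP /imsetP[w]]; rewrite inE => vw Ey.
  have Hy : o (Some v) y.
    have := o2 _ _ (fN w vw); rewrite -Ey.
    by move: nP; rewrite inE => /negbTE->; rewrite addbF.
  by case: (chl y Hy) => l El Hl; exists l; rewrite -?El.
have cardD : #|f @: [set w | adj v w]| <= #|[set y | o y (Some v)]| +
      #|f @: [set w | adj v w] :\: [set y | o y (Some v)]|.
  rewrite -(cardsID [set y | o y (Some v)] (f @: [set w | adj v w])) leq_add2r.
  by apply: subset_leq_card; apply: subsetIr.
rewrite cardF oin in cardD.
have nodir : forall l, o (Some v) (Some l) -> ~~ dir l v.
  move=> l H; apply/negP => dlv.
  have sd : subdiv_edge adj a b (Some l) (Some v).
    have := o1 _ _ H; rewrite /= sym => /andP[-> Hn] /=.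
    by move: Hn; case: (l == a); case: (l == b); case: (v == a); case: (v == b).
  by have := o4 _ _ H; rewrite connect1 // o3.
have adjo : forall l, o (Some v) (Some l) -> adj v l.
  by move=> l /o1 /= /andP[].
case Hr: (reticulation adj dir v) in cardD.
  left.
  have : 0 < #|f @: [set w | adj v w] :\: [set y | o y (Some v)]| by [].
  case/card_gt0P => y /children [l [_ Hl Ll]].
  exists v, l; split => //; [exact: adjo | exact: nodir].
right.
have : 1 < #|f @: [set w | adj v w] :\: [set y | o y (Some v)]| by [].
case/card_gt1P => y1 [y2 [/children [l1 [E1 H1 L1]] /children [l2 [E2 H2 L2]] Hne]].
have l12 : l1 != l2 by move: Hne; rewrite E1 E2; apply: contraNneq => ->.
have vl1 := adjo _ H1; have vl2 := adjo _ H2.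
have : 0 < #|[set w | adj v w] :\: [set l1; l2]|.
  have := cardsID [set l1; l2] [set w | adj v w].
  rewrite deg3 => Hc.
  have : #|[set w | adj v w] :&: [set l1; l2]| <= 2.
    by apply: leq_trans (subset_leq_card (subsetIr _ _)) _; rewrite cards2; case: (_ != _).
  move=> Hi; rewrite lt0n; apply/negP => /eqP H0.
  by move: Hc; rewrite H0 addn0 => Hc; rewrite Hc in Hi.
case/card_gt0P => w; rewrite !inE negb_or => /andP[/andP[wl1 wl2] vw].
have vw' : v != w by apply: contraTneq vw => ->; rewrite irr.
have Nsub : forall y, adj v y -> [|| y == l1, y == l2 | y == w].
  have : [set l1; l2; w] == [set w | adj v w].
    rewrite eqEcard deg3; apply/andP; split.
      by apply/subsetP => z; rewrite !inE => /orP[/orP[]|] /eqP->.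
    by rewrite [[set l1; l2; w]]setUC cardsU1 cards2 !inE negb_or wl1 wl2 l12.
  move/eqP => HS y vy; have : y \in [set w | adj v w] by rewrite inE.
  by rewrite -HS !inE -orbA.
exists v, l1, l2, w; split; first by split.
pose E := [rel x y | adj x y && ~~ (((x == v) && (y == w)) || ((x == w) && (y == v)))].
have Esym : forall x y, E x y -> E y x.
  move=> x y /=; rewrite sym => /andP[-> H] /=.
  by move: H; case: (x == v); case: (y == w); case: (x == w); case: (y == v).
have cl1 : forall x y, E x y -> x \in [set v; l1; l2] -> y \in [set v; l1; l2].
  move=> x y /andP[xy Hn]; rewrite !inE -orbA => /orP[/eqP Ex|/orP[]/eqP Ex]; subst x.
  - have := Nsub y xy; rewrite eqxx /= in Hn.
    case/orP=> [->|/orP[->|/eqP Ey]]; rewrite ?orbT //.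
    by subst y; rewrite eqxx in Hn.
  - by rewrite (leafN l1 v y L1 _ xy) ?eqxx // sym.
  - by rewrite (leafN l2 v y L2 _ xy) ?eqxx // sym.
have cl : closed E [set v; l1; l2].
  move=> x y xy; apply/idP/idP; first exact: cl1.
  by apply: cl1; apply: Esym.
have comp : forall z, connect E v z -> z \in [set v; l1; l2].
  by move=> z Hz; rewrite -(closed_connect cl Hz) !inE eqxx.
have El1 : E v l1 by rewrite /= vl1 eqxx /= (eq_sym l1) (negbTE wl1) (negbTE vw').
have El2 : E v l2 by rewrite /= vl2 eqxx /= (eq_sym l2) (negbTE wl2) (negbTE vw').
split.
  split => //; apply/negP => /comp; rewrite !inE eq_sym (negbTE vw') (negbTE wl1) (negbTE wl2).
  done.
apply/setP => z; rewrite inE; apply/idP/idP; first exact: comp.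
rewrite !inE -orbA => /orP[/eqP->|/orP[]/eqP->]; rewrite ?connect0 //; exact: connect1.
Qed.
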